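(* Let $\mathcal V\subseteq B(H)$ be an operator system and let $p\in\mathcal V$ be a projection in $B(H)$. Let $J_p=\operatorname{span}(C(p)\cap-C(p))$ and $J_{p_n}=\operatorname{span}(C(p_n)\cap-C(p_n))$. Then $M_n(J_p)=J_{p_n}$ for every $n\in\mathbb N$.
   Context: $p_n=I_n\otimes p$ and $C(p_n)=\{x\in M_n(\mathcal V): x=x^*,\ p_nxp_n\ge0\text{ in }B(H^n)\}$. *)

(* Defs.v *)
From mathcomp Require Import all_boot all_algebra.
From mathcomp Require Import complex reals.
Set Implicit Arguments. Unset Strict Implicit. Unset Printing Implicit Defensive.
Import GRing.Theory Num.Theory.
Local Open Scope ring_scope.

Section OpSys.
Variable R : realType.
Variable H : lmodType R[i].
(* inner product, linear in the first argument, conjugate-linear in the second *)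
Variable ip : H -> H -> R[i].

Definition hnorm (x : H) : R := Num.sqrt (complex.Re (ip x x)).

Definition is_hilbert : Prop :=
  [/\ (forall (a : R[i]) (x y z : H), ip (a *: x + y) z = a * ip x z + ip y z),
      (forall x y : H, ip y x = (ip x y)^*),
      (forall x : H, 0 <= ip x x),
      (forall x : H, ip x x = 0 -> x = 0)
    & (forall u : nat -> H,
         (forall e : R, 0 < e -> exists N, forall m n, (N <= m)%N -> (N <= n)%N ->
              hnorm (u m - u n) < e) ->
         exists l : H, forall e : R, 0 < e -> exists N, forall n, (N <= n)%N ->
              hnorm (u n - l) < e)].

Definition bounded_op (T : H -> H) : Prop :=
  (forall (a : R[i]) (x y : H), T (a *: x + y) = a *: T x + T y) /\
  exists M : R, forall x, hnorm (T x) <= M * hnorm x.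

Definition is_adjoint (T S : H -> H) : Prop :=
  forall x y : H, ip (T x) y = ip x (S y).

Definition selfadj (T : H -> H) : Prop := is_adjoint T T.

Definition pos_op (T : H -> H) : Prop := forall x : H, 0 <= ip (T x) x.

Definition is_projection (p : H -> H) : Prop :=
  [/\ bounded_op p, selfadj p & forall x, p (p x) = p x].

Definition operator_system (V : (H -> H) -> Prop) : Prop :=
  [/\ (forall T, V T -> bounded_op T),
      V id,
      V (fun _ => 0),
      (forall (a : R[i]) S T, V S -> V T -> V (fun x => a *: S x + T x))
    & (forall T, V T -> exists S, V S /\ is_adjoint T S)].

Definition op_span (S : (H -> H) -> Prop) (T : H -> H) : Prop :=
  exists (k : nat) (c : 'I_k -> R[i]) (s : 'I_k -> H -> H),
    (forall j, S (s j)) /\ forall x, T x = \sum_(j < k) c j *: s j x.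

Definition Cp (V : (H -> H) -> Prop) (p : H -> H) (T : H -> H) : Prop :=
  [/\ V T, selfadj T & pos_op (fun x => p (T (p x)))].

Definition Jp V p : (H -> H) -> Prop :=
  op_span (fun T => Cp V p T /\ Cp V p (fun x => - T x)).

Variable n : nat.

Definition mx_app (X : 'M[H -> H]_n) (xi : 'I_n -> H) : 'I_n -> H :=
  fun i => \sum_(j < n) X i j (xi j).

Definition ipn (xi eta : 'I_n -> H) : R[i] := \sum_(i < n) ip (xi i) (eta i).

Definition mx_selfadj (X : 'M[H -> H]_n) : Prop :=
  forall xi eta, ipn (mx_app X xi) eta = ipn xi (mx_app X eta).

Definition mx_pos (X : 'M[H -> H]_n) : Prop :=
  forall xi, 0 <= ipn (mx_app X xi) xi.

Definition pn (p : H -> H) : 'M[H -> H]_n :=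
  \matrix_(i, j) (if i == j then p else (fun _ => 0)).

Definition mx_comp (X Y : 'M[H -> H]_n) : 'M[H -> H]_n :=
  \matrix_(i, j) (fun x => \sum_(k < n) X i k (Y k j x)).

Definition in_Mn (S : (H -> H) -> Prop) (X : 'M[H -> H]_n) : Prop :=
  forall i j, S (X i j).

Definition Cpn (V : (H -> H) -> Prop) (p : H -> H) (X : 'M[H -> H]_n) : Prop :=
  [/\ in_Mn V X, mx_selfadj X & mx_pos (mx_comp (pn p) (mx_comp X (pn p)))].

Definition mx_span (S : 'M[H -> H]_n -> Prop) (X : 'M[H -> H]_n) : Prop :=
  exists (k : nat) (c : 'I_k -> R[i]) (s : 'I_k -> 'M[H -> H]_n),
    (forall j, S (s j)) /\
    forall i j' x, X i j' x = \sum_(j < k) c j *: s j i j' x.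

Definition Jpn V p : 'M[H -> H]_n -> Prop :=
  mx_span (fun X => Cpn V p X /\ Cpn V p (\matrix_(i, j) (fun x => - X i j x))).

End OpSys.

(* Main.v *)
Require Import Defs.
From mathcomp Require Import all_boot all_order all_algebra.
From mathcomp Require Import complex reals ring.
From Stdlib Require Import FunctionalExtensionality.
Import Order.TTheory GRing.Theory Num.Theory.
Local Open Scope ring_scope.

Section Aux.
Variable R : realType.
Variable H : lmodType R[i].
Variable ip : H -> H -> R[i].
Hypothesis ipDl : forall (a : R[i]) (x y z : H), ip (a *: x + y) z = a * ip x z + ip y z.
Hypothesis ipC : forall x y : H, ip y x = (ip x y)^*.

Lemma ip0l z : ip 0 z = 0.
Proof.
have := ipDl 1 0 0 z; rewrite scaler0 addr0 mul1r => h.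
by apply: (addrI (ip 0 z)); rewrite addr0 -h.
Qed.

Lemma ipDl' x y z : ip (x + y) z = ip x z + ip y z.
Proof. by rewrite -(scale1r x) ipDl mul1r scale1r. Qed.

Lemma ipZl a x z : ip (a *: x) z = a * ip x z.
Proof. by rewrite -(addr0 (a *: x)) ipDl ip0l addr0. Qed.

Lemma ipNl x z : ip (- x) z = - ip x z.
Proof. by rewrite -scaleN1r ipZl mulN1r. Qed.

Lemma ip0r z : ip z 0 = 0.
Proof. by rewrite ipC ip0l conjC0. Qed.

Lemma ipDr x y z : ip z (x + y) = ip z x + ip z y.
Proof. by rewrite (ipC (x+y) z) (ipC x z) (ipC y z) ipDl' rmorphD. Qed.

Lemma ipZr a x z : ip z (a *: x) = a^* * ip z x.
Proof. by rewrite (ipC (a *: x) z) (ipC x z) ipZl rmorphM. Qed.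

Lemma ipNr x z : ip z (- x) = - ip z x.
Proof. by rewrite -scaleN1r ipZr rmorphN1 mulN1r. Qed.

Lemma ip_suml m (F : 'I_m -> H) z : ip (\sum_(t < m) F t) z = \sum_(t < m) ip (F t) z.
Proof. exact: (big_morph (fun v => ip v z) (fun x y => ipDl' x y z) (ip0l z)). Qed.

Lemma ip_sumr m (F : 'I_m -> H) z : ip z (\sum_(t < m) F t) = \sum_(t < m) ip z (F t).
Proof. exact: (big_morph (fun v => ip z v) (fun x y => ipDr x y z) (ip0r z)). Qed.

Definition lin (f : H -> H) := forall (a : R[i]) x y, f (a *: x + y) = a *: f x + f y.

Lemma lin0 {f} : lin f -> f 0 = 0.
Proof. by move=> hf; have h := hf (-1) 0 0; rewrite scaler0 add0r scaleN1r addNr in h. Qed.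

Lemma linD {f} : lin f -> forall x y, f (x + y) = f x + f y.
Proof. by move=> hf x y; move/(_ 1 x y): hf; rewrite !scale1r => ->. Qed.

Lemma linZ {f} : lin f -> forall a x, f (a *: x) = a *: f x.
Proof. by move=> hf a x; move/(_ a x 0): (hf); rewrite (lin0 hf) !addr0 => ->. Qed.

Lemma linN {f} : lin f -> forall x, f (- x) = - f x.
Proof. by move=> hf x; rewrite -scaleN1r linZ // scaleN1r. Qed.

Lemma lin_sum {f} : lin f -> forall m (F : 'I_m -> H), f (\sum_(t < m) F t) = \sum_(t < m) f (F t).
Proof. by move=> hf m F; apply: (big_morph f (linD hf) (lin0 hf)). Qed.

Lemma polar (T : H -> H) : lin T -> (forall x, ip (T x) x = 0) -> forall x y, ip (T x) y = 0.
Proof.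
move=> hT h0 x y.
have key : forall c : R[i], c * ip (T y) x + c^* * ip (T x) y = 0.
  move=> c; have := h0 (x + c *: y).
  rewrite linD // linZ // ipDl' !ipDr !ipZl !ipZr !h0 !mulr0 !addr0 add0r.
  by rewrite addrC.
have k1 := key 1; have k2 := key 'i.
rewrite conjC1 !mul1r in k1; rewrite conjCi in k2.
have e : ip (T y) x = - ip (T x) y by apply/eqP; rewrite -subr_eq0 opprK k1.
rewrite e mulrN mulNr -opprD -mulrDl in k2.
move/eqP: k2; rewrite oppr_eq0 mulf_eq0 => /orP[|/eqP //].
by rewrite -mulr2n mulrn_eq0 /= => hi; have := @neq0Ci (R[i]); rewrite hi.
Qed.

Section Span.
Variables (E A : Type) (ev : E -> A -> H) (S : E -> Prop).
Definition spanF (f : A -> H) : Prop :=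
  exists k (c : 'I_k -> R[i]) (s : 'I_k -> E),
    (forall j, S (s j)) /\ forall a, f a = \sum_(j < k) c j *: ev (s j) a.

Lemma spanF_ext {f g} : (forall a, f a = g a) -> spanF f -> spanF g.
Proof. by move=> fg [k [c [s [hs hf]]]]; exists k, c, s; split => // a; rewrite -fg. Qed.

Lemma spanF_0 : spanF (fun _ => 0).
Proof.
have s0 : 'I_0 -> E by case=> m; rewrite ltn0.
by exists 0, (fun _ => 0), s0; split => [[]|a]; rewrite ?big_ord0.
Qed.

Lemma spanF_gen e : S e -> spanF (ev e).
Proof. by move=> he; exists 1, (fun _ => 1), (fun _ => e); split => // a; rewrite big_ord1 scale1r. Qed.

Lemma spanF_add {f g} : spanF f -> spanF g -> spanF (fun a => f a + g a).
Proof.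
move=> [k1 [c1 [s1 [hs1 hf]]]] [k2 [c2 [s2 [hs2 hg]]]].
exists (k1 + k2), (fun t => match split t with inl u => c1 u | inr u => c2 u end),
  (fun t => match split t with inl u => s1 u | inr u => s2 u end).
split.
  by move=> t; case: (split t).
move=> a; rewrite big_split_ord /= hf hg.
congr (_ + _); apply: eq_bigr => u _.
  by rewrite (unsplitK (inl u : 'I_k1 + 'I_k2)).
by rewrite (unsplitK (inr u : 'I_k1 + 'I_k2)).
Qed.

Lemma spanF_scale d {f} : spanF f -> spanF (fun a => d *: f a).
Proof.
move=> [k [c [s [hs hf]]]]; exists k, (fun j => d * c j), s; split => // a.
by rewrite hf scaler_sumr; apply: eq_bigr => j _; rewrite scalerA.
Qed.

Lemma spanF_sum {m} {F : 'I_m -> A -> H} :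
  (forall t, spanF (F t)) -> spanF (fun a => \sum_(t < m) F t a).
Proof.
elim: m F => [|m IH] F hF.
  by apply: (spanF_ext _ spanF_0) => a; rewrite big_ord0.
apply: (spanF_ext _ (spanF_add (IH (fun t => F (widen_ord (leqnSn m) t)) _) (hF ord_max))).
  by move=> a; rewrite big_ord_recr.
by move=> t; apply: hF.
Qed.
End Span.
Arguments spanF {E A}.
Arguments spanF_ext {E A ev S f g}.
Arguments spanF_0 {E A ev S}.
Arguments spanF_gen {E A ev S e}.
Arguments spanF_add {E A ev S f g}.
Arguments spanF_scale {E A ev S} d {f}.
Arguments spanF_sum {E A ev S m F}.

Variable n : nat.

Lemma L0 (p : H -> H) (Y : 'M[H -> H]_n) : (forall k l, Y k l 0 = 0) -> lin p ->
  forall i j x, mx_comp (pn n p) (mx_comp Y (pn n p)) i j x = p (Y i j (p x)).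
Proof.
move=> hY hp i j x; rewrite /mx_comp /pn mxE.
under eq_bigr => k _ do rewrite !mxE.
under eq_bigr => k _ do under eq_bigr => l _ do rewrite mxE.
rewrite (bigD1 i) //= eqxx.
rewrite [X in _ + X]big1 => [|k]; last by rewrite eq_sym => /negbTE ->.
rewrite addr0 (bigD1 j) //= eqxx big1 ?addr0 // => l /negbTE -> /=.
exact: hY.
Qed.

Definition delta (j : 'I_n) (x : H) : 'I_n -> H := fun l => if l == j then x else 0.

Lemma L1 (Y : 'M[H -> H]_n) : (forall k l, Y k l 0 = 0) ->
  forall j x k, mx_app Y (delta j x) k = Y k j x.
Proof.
move=> hY j x k; rewrite /mx_app /delta (bigD1 j) //= eqxx big1 ?addr0 //.
by move=> l /negbTE ->.
Qed.

Lemma L1f (T : 'I_n -> 'I_n -> H -> H) : (forall k l, T k l 0 = 0) ->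
  forall j x k, \sum_(l < n) T k l (delta j x l) = T k j x.
Proof.
move=> hY j x k; rewrite /delta (bigD1 j) //= eqxx big1 ?addr0 //.
by move=> l /negbTE ->.
Qed.

Lemma L2 u i y : ipn ip u (delta i y) = ip (u i) y.
Proof.
rewrite /ipn /delta (bigD1 i) //= eqxx big1 ?addr0 //.
by move=> l /negbTE ->; rewrite ip0r.
Qed.

Lemma L2' u j x : ipn ip (delta j x) u = ip x (u j).
Proof.
rewrite /ipn /delta (bigD1 j) //= eqxx big1 ?addr0 //.
by move=> l /negbTE ->; rewrite ip0l.
Qed.

Lemma hii : 'i * 'i = -1 :> R[i].
Proof. by rewrite -expr2 sqrCi. Qed.

Lemma cancel_ii (e1 e2 c : R[i]) : e1 - e2 = c * ('i * 'i + 1) -> e1 = e2.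
Proof. by rewrite hii addNr mulr0 => /eqP; rewrite subr_eq0 => /eqP. Qed.

Lemma ab0 (a b : R[i]) : a + b = 0 -> 'i^* * a + 'i * b = 0 -> a = 0.
Proof.
move=> h1; have -> : b = - a by apply/eqP; rewrite -subr_eq0 opprK addrC h1.
rewrite conjCi mulrN mulNr -opprD -mulrDl => /eqP; rewrite oppr_eq0 mulf_eq0 => /orP[|/eqP //].
by rewrite -mulr2n mulrn_eq0 /= => hi; have := @neq0Ci (R[i]); rewrite hi.
Qed.

Lemma lin_comp {f g} : lin f -> lin g -> lin (fun x => f (g x)).
Proof. by move=> hf hg a x y; rewrite hg hf. Qed.

Definition evM (X : 'M[H -> H]_n) (a : 'I_n * 'I_n * H) : H := X a.1.1 a.1.2 a.2.
Definition evO (T : H -> H) (x : H) : H := T x.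

Variable V : (H -> H) -> Prop.
Variable p : H -> H.
Hypothesis hVlin : forall T, V T -> lin T.
Hypothesis hV0 : V (fun _ => 0).
Hypothesis hVc : forall (a : R[i]) S T, V S -> V T -> V (fun x => a *: S x + T x).
Hypothesis hp : lin p.

Definition Sp := fun T => Cp ip V p T /\ Cp ip V p (fun x => - T x).
Definition Spn := fun (X : 'M[H -> H]_n) => Cpn ip V p X /\ Cpn ip V p (\matrix_(i, j) (fun x => - X i j x)).

Lemma V_scale a S : V S -> V (fun x => a *: S x).
Proof.
move=> hS; have -> : (fun x => a *: S x) = (fun x => a *: S x + (fun _ : H => 0) x).
  by apply: functional_extensionality => x; rewrite addr0.
exact: hVc.
Qed.

Lemma V_comb a b U W : V U -> V W -> V (fun x => a *: U x + b *: W x).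
Proof. by move=> hU hW; exact (hVc a U (fun x => b *: W x) hU (V_scale b W hW)). Qed.

Lemma CC_of T : V T -> selfadj ip T -> (forall x, ip (p (T (p x))) x = 0) -> Sp T.
Proof.
move=> hT hsa h0; split; split => //.
- by move=> x /=; rewrite h0.
- have -> : (fun x => - T x) = (fun x => (-1) *: T x) by apply: functional_extensionality => x; rewrite scaleN1r.
  exact: V_scale.
- by move=> x y /=; rewrite ipNl ipNr hsa.
- by move=> x /=; rewrite (linN hp) ipNl h0 oppr0.
Qed.

Lemma CC_zero T : Sp T -> forall x y, ip (p (T (p x))) y = 0.
Proof.
move=> [[hT _ hpos] [_ _ hneg]].
apply: (@polar (fun x => p (T (p x)))).
  exact: (lin_comp hp (lin_comp (hVlin _ hT) hp)).
move=> x; apply/eqP; rewrite eq_le; apply/andP; split; last exact: hpos.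
by have := hneg x; rewrite /= (linN hp) ipNl oppr_ge0.
Qed.

Lemma Cpn_gen s (g : 'I_n -> 'I_n -> R[i]) : V s -> selfadj ip s ->
  (forall x y, ip (p (s (p x))) y = 0) -> (forall k l, (g l k)^* = g k l) ->
  Cpn ip V p (\matrix_(k, l) (fun x => g k l *: s x)).
Proof.
move=> hs hsa h0 hg; split.
- by move=> k l; rewrite mxE; apply: V_scale.
- move=> xi eta; rewrite /ipn /mx_app.
  transitivity (\sum_(k < n) \sum_(l < n) g k l * ip (xi l) (s (eta k))).
    apply: eq_bigr => k _; rewrite ip_suml; apply: eq_bigr => l _.
    by rewrite mxE ipZl hsa.
  rewrite exchange_big /=; apply: eq_bigr => l _; rewrite ip_sumr; apply: eq_bigr => k _.
  by rewrite mxE ipZr hg.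
- move=> xi; rewrite /ipn /mx_app.
  have hY0 : forall k l, (\matrix_(k, l) (fun x => g k l *: s x)) k l 0 = 0.
    by move=> k l; rewrite mxE (lin0 (hVlin _ hs)) scaler0.
  rewrite big1 // => k _; rewrite ip_suml big1 // => l _.
  by rewrite (L0 _ _ hY0 hp) mxE (linZ hp) ipZl h0 mulr0.
Qed.

Lemma Spn_gen s (g : 'I_n -> 'I_n -> R[i]) : V s -> selfadj ip s ->
  (forall x y, ip (p (s (p x))) y = 0) -> (forall k l, (g l k)^* = g k l) ->
  Spn (\matrix_(k, l) (fun x => g k l *: s x)).
Proof.
move=> hs hsa h0 hg; split; first exact: Cpn_gen.
have -> : (\matrix_(i, j) (fun x => - (\matrix_(k, l) (fun x => g k l *: s x)) i j x))
   = \matrix_(k, l) (fun x => (- g k l) *: s x).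
  apply/matrixP => i j; rewrite !mxE; apply: functional_extensionality => x.
  by rewrite scaleNr.
apply: Cpn_gen => // k l; by rewrite rmorphN /= hg.
Qed.

Lemma scal_id (b1 b2 : bool) :
  2^-1 * (b1%:R + b2%:R) + (-'i / 2) * ('i * b1%:R - 'i * b2%:R) = b1%:R :> R[i].
Proof.
case: b1; case: b2 => /=.
- by apply: (@cancel_ii _ _ (0)); field.
- by apply: (@cancel_ii _ _ (-2^-1)); field.
- by apply: (@cancel_ii _ _ (2^-1)); field.
- by apply: (@cancel_ii _ _ (0)); field.
Qed.

Lemma base_span s i0 j0 : Sp s ->
  spanF evM Spn (fun a => if (i0 == a.1.1) && (j0 == a.1.2) then s a.2 else 0).
Proof.
move=> hS; have h0 := CC_zero _ hS; case: hS => [[hs hsa _] _].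
pose g1 (k l : 'I_n) : R[i] := ((i0 == k) && (j0 == l))%:R + ((j0 == k) && (i0 == l))%:R.
pose g2 (k l : 'I_n) : R[i] := 'i * ((i0 == k) && (j0 == l))%:R - 'i * ((j0 == k) && (i0 == l))%:R.
have hg1 : forall k l, (g1 l k)^* = g1 k l.
  move=> k l; rewrite /g1 rmorphD /= !conjC_nat addrC.
  by rewrite (andbC (j0 == l)) (andbC (i0 == l)).
have hg2 : forall k l, (g2 l k)^* = g2 k l.
  move=> k l; rewrite /g2 rmorphB !rmorphM /= conjCi !conjC_nat.
  rewrite (andbC (j0 == l)) (andbC (i0 == l)); ring.
apply: (spanF_ext _ (spanF_add (spanF_scale (2^-1) (spanF_gen (Spn_gen _ _ hs hsa h0 hg1)))
                 (spanF_scale (-'i / 2) (spanF_gen (Spn_gen _ _ hs hsa h0 hg2))))).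
move=> [[k l] x]; rewrite /evM /= !mxE !scalerA -scalerDl /g1 /g2 scal_id.
by case: ((i0 == k) && (j0 == l)); rewrite ?scale1r ?scale0r.
Qed.

Lemma dir1 (X : 'M[H -> H]_n) : in_Mn (Jp ip V p) X -> Jpn ip V p X.
Proof.
move=> hX.
have hE : forall i0 j0, spanF evM Spn
    (fun a => if (i0 == a.1.1) && (j0 == a.1.2) then X i0 j0 a.2 else 0).
  move=> i0 j0; have [k [c [s [hs hx]]]] := hX i0 j0.
  apply: (spanF_ext _ (spanF_sum (fun t => spanF_scale (c t) (base_span _ i0 j0 (hs t))))).
  move=> [[i j] x] /=; case: ifP => _; first by rewrite hx.
  by rewrite big1 // => t _; rewrite scaler0.
have : spanF evM Spn (evM X).
  apply: (spanF_ext _ (spanF_sum (fun i0 => spanF_sum (fun j0 => hE i0 j0)))).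
  move=> [[i j] x]; rewrite /evM /=.
  rewrite (bigD1 i) //= [X in _ + X]big1 => [|i0 /negbTE -> /=]; last by rewrite big1.
  rewrite eqxx addr0 /= (bigD1 j) //= eqxx big1 ?addr0 // => j0 /negbTE -> //.
move=> [k [c [s [hs h]]]]; exists k, c, s; split => // i j x.
exact: (h (i, j, x)).
Qed.

Lemma entry_adj (Y : 'M[H -> H]_n) : Cpn ip V p Y -> forall i j x y, ip (Y i j x) y = ip x (Y j i y).
Proof.
move=> [hV hsa _] i j x y.
have h0 : forall k l, Y k l 0 = 0 by move=> k l; apply: lin0; apply: hVlin.
by have := hsa (delta j x) (delta i y); rewrite L2 L2' !L1.
Qed.

Lemma entry_zero (Y : 'M[H -> H]_n) : Cpn ip V p Y -> Cpn ip V p (\matrix_(i, j) (fun x => - Y i j x)) ->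
  forall i j x, ip (p (Y i j (p x))) x = 0.
Proof.
move=> [hV _ hpos] [_ _ hpos'] i j x.
have h0 : forall k l, Y k l 0 = 0 by move=> k l; apply: lin0; apply: hVlin.
pose T k l := fun x => p (Y k l (p x)).
have hT : forall k l, lin (T k l) by move=> k l; exact: lin_comp hp (lin_comp (hVlin _ (hV k l)) hp).
have hT0 : forall k l, T k l 0 = 0 by move=> k l; apply: lin0.
have eZ : forall xi, mx_app (mx_comp (pn n p) (mx_comp Y (pn n p))) xi
   = fun k => \sum_(l < n) T k l (xi l).
  move=> xi; apply: functional_extensionality => k; rewrite /mx_app.
  by apply: eq_bigr => l _; rewrite (L0 _ _ h0 hp).
have eZ' : forall xi, mx_app (mx_comp (pn n p) (mx_comp (\matrix_(i, j) (fun x => - Y i j x)) (pn n p))) xi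
   = fun k => - \sum_(l < n) T k l (xi l).
  move=> xi; apply: functional_extensionality => k; rewrite /mx_app -sumrN.
  have h0' : forall k l, (\matrix_(i, j) (fun x => - Y i j x)) k l 0 = 0.
    by move=> k' l'; rewrite mxE h0 oppr0.
  by apply: eq_bigr => l _; rewrite (L0 _ _ h0' hp) mxE (linN hp).
have Q0 : forall xi, ipn ip (fun k => \sum_(l < n) T k l (xi l)) xi = 0.
  move=> xi; apply/eqP; rewrite eq_le; apply/andP; split.
    have := hpos' xi; rewrite eZ' /ipn.
    under eq_bigr => k _ do rewrite ipNl.
    by rewrite sumrN oppr_ge0.
  by have := hpos xi; rewrite eZ.
pose F u v := ipn ip (fun k => \sum_(l < n) T k l (u l)) v.
have B : forall u v, F u v + F v u = 0.
  move=> u v; have := Q0 (fun l => u l + v l).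
  have e : forall k, ip (\sum_(l < n) T k l (u l + v l)) (u k + v k) =
     ip (\sum_(l < n) T k l (u l)) (u k) + ip (\sum_(l < n) T k l (v l)) (v k) +
     (ip (\sum_(l < n) T k l (u l)) (v k) + ip (\sum_(l < n) T k l (v l)) (u k)).
    move=> k; under eq_bigr => l _ do rewrite (linD (hT k l)).
    rewrite big_split /= ipDl' !ipDr; ring.
  rewrite /ipn (eq_bigr _ (fun k _ => e k)) !big_split /=.
  have q1 := Q0 u; have q2 := Q0 v; rewrite /ipn in q1 q2.
  by rewrite q1 q2 !add0r.
have Bij : forall y, ip (T i j x) y + ip (T j i y) x = 0.
  move=> y; have := B (delta j x) (delta i y).
  by rewrite /F !L2 !L1f.
apply: (@ab0 _ (ip (T j i x) x)); first exact: Bij.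
have := Bij ('i *: x); by rewrite ipZr (linZ (hT j i)) ipZl.
Qed.

Lemma comb_Sp U W a : V U -> V W -> (forall x y, ip (U x) y = ip x (W y)) ->
  (forall x, ip (p (U (p x))) x = 0) -> (forall x, ip (p (W (p x))) x = 0) ->
  Sp (fun x => a *: U x + a^* *: W x).
Proof.
move=> hU hW adj zU zW; apply: CC_of.
- exact: V_comb.
- have adj' : forall x y, ip (W x) y = ip x (U y).
    by move=> x y; rewrite (ipC y (W x)) -adj -ipC.
  move=> x y /=; rewrite ipDl' !ipZl ipDr !ipZr conjCK adj adj'.
  by rewrite addrC.
- by move=> x /=; rewrite (linD hp) !(linZ hp) ipDl' !ipZl zU zW !mulr0 addr0.
Qed.

Lemma entry_span (Y : 'M[H -> H]_n) : Spn Y -> forall i j, spanF evO Sp (Y i j).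
Proof.
move=> [hC hC'] i j.
have adj := entry_adj _ hC.
have z := entry_zero _ hC hC'.
case: hC => hV _ _.
have hA := comb_Sp _ _ (2^-1) (hV i j) (hV j i) (adj i j) (z i j) (z j i).
have hB := comb_Sp _ _ (-'i / 2) (hV i j) (hV j i) (adj i j) (z i j) (z j i).
apply: (spanF_ext _ (spanF_add (spanF_gen hA) (spanF_scale 'i (spanF_gen hB)))).
move=> x; rewrite /evO scalerDr !scalerA addrACA -!scalerDl.
have -> : 2^-1 + 'i * (- 'i / 2) = 1 :> R[i] by apply: (@cancel_ii _ _ (-2^-1)); field.
have -> : (2^-1)^* + 'i * (- 'i / 2)^* = 0 :> R[i].
  rewrite rmorphM rmorphN /= conjCi fmorphV /= conjC_nat.
  by apply: (@cancel_ii _ _ (2^-1)); field.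
by rewrite scale1r scale0r addr0.
Qed.

Lemma dir2 (X : 'M[H -> H]_n) : Jpn ip V p X -> in_Mn (Jp ip V p) X.
Proof.
move=> [k [c [Ys [hY hX]]]] i j.
change (spanF evO Sp (X i j)).
apply: (spanF_ext _ (spanF_sum (fun t => spanF_scale (c t) (entry_span _ (hY t) i j)))).
by move=> x; rewrite hX.
Qed.

End Aux.

Theorem lemma3p4 (R : realType) (H : lmodType R[i]) (ip : H -> H -> R[i])
  (V : (H -> H) -> Prop) (p : H -> H) :
  is_hilbert ip ->
  operator_system ip V ->
  V p ->
  is_projection ip p ->
  forall (n : nat) (X : 'M[H -> H]_n),
    in_Mn (Jp ip V p) X <-> Jpn ip V p X.
Proof.
move=> [ipDl ipC _ _ _] [hVb _ hV0 hVc _] _ [[hp _] _ _] n X.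
have hVlin : forall T, V T -> lin R H T by move=> T hT; exact: (hVb T hT).1.
split.
  exact: (dir1 _ _ _ ipDl ipC _ _ _ hVlin hV0 hVc hp).
exact: (dir2 _ _ _ ipDl ipC _ _ _ hVlin hV0 hVc hp).
Qed.
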